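(* Let $n\ge 1$ and let $f\in\mathcal{G}_1$ be $n$-ary, $f=2x_1\cdots x_n\left(\sum_{i=1}^n a_ix_i^2+\sum_{i=1}^n b_ix_i+c\right)$, with $a_i\neq0$ for some $i$. Then $2u_n\in C(f)$, where $u_n=x_1\cdots x_n(x_1+1)$.
   Context: All operations are on $\mathbb{Z}_8$. $\mathcal{G}_1$ is the set of all operations (of any arity $n\ge1$) of the form $2x_1\cdots x_n\left(\sum_{i=1}^n a_ix_i^2+\sum_{i=1}^n b_ix_i+c\right)$ with $a_i,b_i\in\{0,1\}$ and $c\in\{0,1,2,3\}$. For an operation $f$, $C(f)$ denotes the clone generated by $f$ together with binary addition and all unary constant operations. *)

(* Defs.v *)
From mathcomp Require Import all_boot all_order all_algebra.
Set Implicit Arguments. Unset Strict Implicit. Unset Printing Implicit Defensive.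
Import GRing.Theory.
Local Open Scope ring_scope.

Definition op (k : nat) := ('I_k -> 'Z_8) -> 'Z_8.

Inductive term (n k : nat) : Type :=
| TVar of 'I_k
| TConst of 'Z_8
| TAdd of term n k & term n k
| TF of ('I_n -> term n k).

Fixpoint teval (n k : nat) (F : op n) (t : term n k) (x : 'I_k -> 'Z_8) : 'Z_8 :=
  match t with
  | TVar i => x i
  | TConst c => c
  | TAdd t1 t2 => teval F t1 x + teval F t2 x
  | TF ts => F (fun j => teval F (ts j) x)
  end.

(* C(F): the clone generated by F, + and all unary constants; its k-ary
   members are exactly the k-ary term operations. *)
Definition in_C (n : nat) (F : op n) (k : nat) (g : op k) : Prop :=
  exists t : term n k, forall x, teval F t x = g x.

Definition G1op (n : nat) (a b : 'I_n -> bool) (c : nat) : op n :=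
  fun x => 2 * (\prod_(i < n) x i) *
           (\sum_(i < n) (a i)%:R * x i ^+ 2 + \sum_(i < n) (b i)%:R * x i + c%:R).

(* u_n = x_1 ... x_n (x_1 + 1), with x_1 the variable of index 0. *)
Definition u_op (n : nat) (hn : (0 < n)%N) : op n :=
  fun x => (\prod_(i < n) x i) * (x (Ordinal hn) + 1).

(* Main.v *)
Require Import Defs.
From mathcomp Require Import all_boot all_order all_algebra.
From mathcomp Require Import fingroup perm ring.
Import GRing.Theory.
Local Open Scope ring_scope.

Fixpoint tmul (n k : nat) (m : nat) (t : term n k) : term n k :=
  match m with 0 => TConst n k 0 | S m => TAdd t (tmul n k m t) end.

Arguments tmul : simpl never.

Lemma teval_tmul n k (F : op n) m (t : term n k) x :
  teval F (tmul n k m t) x = teval F t x *+ m.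
Proof. elim: m => [|m IH]; first by [].
by rewrite /tmul -/tmul /= IH mulrS. Qed.

Lemma teval_add n k (F : op n) (t1 t2 : term n k) x :
  teval F (TAdd t1 t2) x = teval F t1 x + teval F t2 x.
Proof. by []. Qed.

Lemma teval_F n k (F : op n) (ts : 'I_n -> term n k) x :
  teval F (TF ts) x = F (fun j => teval F (ts j) x).
Proof. by []. Qed.

Lemma mul7 (y : 'Z_8) : y *+ 7 = - y.
Proof.
apply/eqP; rewrite -subr_eq0 opprK -mulrSr -mulr_natr.
have -> : (8%:R : 'Z_8) = 0 by apply/eqP.
by rewrite mulr0.
Qed.

Lemma Gsplit n (a b : 'I_n -> bool) c k (w y : 'I_n -> 'Z_8) :
  a k -> (forall j, j != k -> w j = y j) ->
  G1op a b c w = 2 * w k * (\prod_(j | j != k) y j) *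
    (w k ^+ 2 + (b k)%:R * w k +
      (\sum_(j | j != k) (a j)%:R * y j ^+ 2 + \sum_(j | j != k) (b j)%:R * y j + c%:R)).
Proof.
move=> ak Hw; rewrite /G1op [\prod_(i < n) _](bigD1 k) //.
rewrite [\sum_(i < n) (a i)%:R * _](bigD1 k) // [\sum_(i < n) (b i)%:R * _](bigD1 k) // ak.
have E1 : \prod_(j | j != k) w j = \prod_(j | j != k) y j.
  by apply: eq_bigr => j /Hw.
have E2 : \sum_(j | j != k) (a j)%:R * w j ^+ 2 = \sum_(j | j != k) (a j)%:R * y j ^+ 2.
  by apply: eq_bigr => j /Hw ->.
have E3 : \sum_(j | j != k) (b j)%:R * w j = \sum_(j | j != k) (b j)%:R * y j.
  by apply: eq_bigr => j /Hw ->.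
rewrite E1 E2 E3 /=.
ring.
Qed.

Lemma key (bb : bool) (X : 'Z_8) :
  let v : 'Z_8 := if bb then 3 else 1 in
  2 * (3 * X ^+ 2 * v + 3 * X * v ^+ 2 + 2 * bb%:R * X * v) = 2 * X * (X + 1).
Proof.
case: X => [[|[|[|[|[|[|[|[|m]]]]]]]] Hm] //; case: bb; apply/eqP => //.
Qed.

Theorem lemma4p3 (n : nat) (hn : (0 < n)%N) (a b : 'I_n -> bool) (c : nat)
  (hc : (c < 4)%N) (ha : exists i, a i) :
  in_C (G1op a b c) (fun x => 2 * u_op hn x).
Proof.
case: ha => k ak.
pose z0 := Ordinal hn.
pose pi := tperm k z0.
pose v : 'Z_8 := if b k then 3 else 1.
pose s (z : term n n) := fun j => if j == k then z else TVar n (pi j).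
exists (TAdd (TF (s (TAdd (TVar n z0) (TConst n n v))))
          (tmul n n 7 (TAdd (TF (s (TVar n z0))) (TF (s (TConst n n v)))))).
move=> x; rewrite teval_add teval_tmul teval_add !teval_F mul7.
have Hs : forall z j, j != k -> teval (G1op a b c) (s z j) x = x (pi j).
  by move=> z j /negbTE; rewrite /s => ->.
have Hk : forall z, teval (G1op a b c) (s z k) x = teval (G1op a b c) z x.
  by move=> z; rewrite /s eqxx.
rewrite (@Gsplit n a b c k _ (fun j => x (pi j)) ak (Hs _)).
rewrite (@Gsplit n a b c k _ (fun j => x (pi j)) ak (Hs _)).
rewrite (@Gsplit n a b c k _ (fun j => x (pi j)) ak (Hs _)).
rewrite !Hk /=.
set R := \prod_(j | j != k) x (pi j).
set S := (\sum_(j | j != k) _ + _ + _).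
have HP : \prod_i x i = x z0 * R.
  rewrite (reindex_inj (@perm_inj _ pi)) (bigD1 k) //=.
  by rewrite /pi tpermL.
rewrite /u_op HP.
set X := x z0.
set bk := (b k)%:R.
have -> : 2 * (X + v) * R * ((X + v) ^+ 2 + bk * (X + v) + S) -
  (2 * X * R * (X ^+ 2 + bk * X + S) + 2 * v * R * (v ^+ 2 + bk * v + S))
  = R * (2 * (3 * X ^+ 2 * v + 3 * X * v ^+ 2 + 2 * bk * X * v)) by ring.
rewrite /bk /v key; ring.
Qed.
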